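(* Let $\mathcal{P}$ be a profile of unrooted phylogenetic trees whose display graph $G(\mathcal{P})$ is connected, let $S$ be an agreement supertree of $\mathcal{P}$, and let $\Psi$ be the cut function of $S$. Then (i) for every edge $e\in E(S)$, $\Psi(e)$ is a cut of $G(\mathcal{P})$; and (ii) for every edge $e\in E(S)$, $\Psi(e)$ is a minimal cut of $G(\mathcal{P})$ if and only if $G(\mathcal{P})-\Psi(e)$ has exactly two connected components.
   Context: A phylogenetic tree $T$ is an unrooted tree whose leaves are bijectively labeled by $\mathcal{L}(T)$ (leaves identified with labels; internal vertices have degree at least three). A profile $\mathcal{P}=\{T_1,\dots,T_k\}$ is a finite collection of phylogenetic trees (input trees), $\mathcal{L}(\mathcal{P})=\bigcup_i\mathcal{L}(T_i)$; internal vertices of distinct trees are disjoint, while leaves with the same label are the same vertex. The display graph $G(\mathcal{P})$ has vertex set $\bigcup_i V(T_i)$ and edge set $\bigcup_i E(T_i)$. For phylogenetic trees $S,T$ with $\mathcal{L}(T)\subseteq\mathcal{L}(S)$, $S_{|\mathcal{L}(T)}$ is obtained from the minimal subtree of $S$ connecting the leaves in $\mathcal{L}(T)$ by suppressing degree-two vertices; $S$ and $T$ agree if $S_{|\mathcal{L}(T)}$ is label-preservingly isomorphic to $T$. An agreement supertree of $\mathcal{P}$ is a phylogenetic tree with label set $\mathcal{L}(\mathcal{P})$ agreeing with every tree of $\mathcal{P}$. Cut function: for an agreement supertree $S$ and an edge $e=\{u,v\}$ of $S$, let $L_u$, $L_v$ be the label sets of the subtrees of $S-e$ containing $u$ and $v$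 respectively. For an input tree $T$ with $\mathcal{L}(T)\cap L_u\neq\emptyset$ and $\mathcal{L}(T)\cap L_v\neq\emptyset$, there is a unique edge $f$ of $T$ whose deletion separates $\mathcal{L}(T)$ into $\mathcal{L}(T)\cap L_u$ and $\mathcal{L}(T)\cap L_v$; $e$ is called the agreement edge of $S$ corresponding to $f$. The cut function $\Psi$ maps each $e\in E(S)$ to the set $\Psi(e)$ of all edges $f$ of input trees such that $e$ is the agreement edge corresponding to $f$ (input trees whose labels lie entirely in $L_u$ or entirely in $L_v$ contribute no edge). A cut of a connected graph $G$ is $F\subseteq E(G)$ with $G-F$ (same vertices, edges of $F$ removed) disconnected; minimal if no proper subset is a cut. *)

(* Defs.v *)
From mathcomp Require Import all_boot.
From mathcomp Require Import boolp.

Set Implicit Arguments.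
Unset Strict Implicit.
Unset Printing Implicit Defensive.

Section Graphs.
Variable V : finType.

Definition adj (E : {set {set V}}) : rel V := fun x y => [set x; y] \in E.

Definition is_graph (Vs : {set V}) (E : {set {set V}}) : Prop :=
  forall e, e \in E ->
    exists x y, [/\ x \in Vs, y \in Vs, x != y & e = [set x; y]].

Definition connected_graph (Vs : {set V}) (E : {set {set V}}) : Prop :=
  (exists x, x \in Vs) /\
  (forall x y, x \in Vs -> y \in Vs -> connect (adj E) x y).

(* a tree: connected graph without cycles (a cycle = at least 3 distinct
   vertices, cyclically adjacent) *)
Definition is_tree (Vs : {set V}) (E : {set {set V}}) : Prop :=
  [/\ is_graph Vs E, connected_graph Vs E &
      forall c : seq V, ucycle (adj E) c -> size c <= 2].

Definition deg (E : {set {set V}}) (v : V) : nat := #|[set e in E | v \in e]|.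

Definition ncomp (Vs : {set V}) (E : {set {set V}}) : nat :=
  #|[set [set y in Vs | connect (adj E) x y] | x in Vs]|.

Definition is_cut (Vs : {set V}) (E F : {set {set V}}) : Prop :=
  F \subset E /\ ~ connected_graph Vs (E :\: F).

Definition is_min_cut (Vs : {set V}) (E F : {set {set V}}) : Prop :=
  is_cut Vs E F /\ forall F' : {set {set V}}, F' \proper F -> ~ is_cut Vs E F'.

Definition on_path (E : {set {set V}}) (a b v : V) : Prop :=
  exists p : seq V,
    [/\ uniq (a :: p), path (adj E) a p, last a p = b & v \in a :: p].

(* vertex set of the minimal subtree connecting Y *)
Definition spanV (Vs : {set V}) (E : {set {set V}}) (Y : {set V}) : {set V} :=
  [set v in Vs | `[< exists a b, [/\ a \in Y, b \in Y & on_path E a b v] >]].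

Definition spanE (E : {set {set V}}) (M : {set V}) : {set {set V}} :=
  [set e in E | e \subset M].

(* after suppressing degree-two vertices: remaining vertices *)
Definition suppV (Vs : {set V}) (E : {set {set V}}) (Y : {set V}) : {set V} :=
  let M := spanV Vs E Y in [set v in M | deg (spanE E M) v != 2].

Definition suppAdj (Vs : {set V}) (E : {set {set V}}) (Y : {set V})
    (w1 w2 : V) : Prop :=
  let M := spanV Vs E Y in
  w1 != w2 /\
  exists p : seq V,
    [/\ uniq (w1 :: p), path (adj (spanE E M)) w1 p, last w1 p = w2 &
        forall z, z \in behead (belast w1 p) -> z \notin suppV Vs E Y].

End Graphs.

(* ---------- Phylogenetic trees over label type X ----------
   vertices: inl x (leaf labeled x) or inr u (internal vertex u : I) *)
Record ptree (X I : finType) := PTree {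
  pV : {set X + I};
  pE : {set {set X + I}}
}.

Section Phylo.
Variables X : finType.

Definition labels (I : finType) (T : ptree X I) : {set X} :=
  [set x | inl x \in pV T].

Definition is_phylo (I : finType) (T : ptree X I) : Prop :=
  [/\ is_tree (pV T) (pE T),
      (forall x, inl x \in pV T -> deg (pE T) (inl x) <= 1) &
      (forall u, inr u \in pV T -> 3 <= deg (pE T) (inr u))].

(* S and T agree: S|L(T) (minimal subtree + suppression) is
   label-preservingly isomorphic to T *)
Definition agrees (J I : finType) (S : ptree X J) (T : ptree X I) : Prop :=
  let Y := [set (inl x : X + J) | x in labels T] in
  let W := suppV (pV S) (pE S) Y in
  exists f : X + J -> X + I,
    [/\ {in W &, injective f},
        f @: W = pV T,
        (forall x, inl x \in W -> f (inl x) = inl x) &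
        {in W &, forall u v, suppAdj (pV S) (pE S) Y u v <-> [set f u; f v] \in pE T}].

Definition sideL (I : finType) (T : ptree X I) (e : {set X + I}) (u : X + I)
    : {set X} :=
  [set x | (inl x \in pV T) && connect (adj (pE T :\ e)) u (inl x)].

Variables (I : finType) (k : nat).

Definition emb (i : 'I_k) (w : X + I) : X + ('I_k * I) :=
  match w with inl x => inl x | inr u => inr (i, u) end.

Definition dV (P : 'I_k -> ptree X I) : {set X + ('I_k * I)} :=
  \bigcup_(i < k) (emb i @: pV (P i)).

Definition dE (P : 'I_k -> ptree X I) : {set {set X + ('I_k * I)}} :=
  \bigcup_(i < k) [set emb i @: g | g : {set X + I} in pE (P i)].

Definition agreement_supertree (J : finType) (P : 'I_k -> ptree X I)
    (S : ptree X J) : Prop :=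
  [/\ is_phylo S,
      labels S = \bigcup_(i < k) labels (P i) &
      forall i, agrees S (P i)].

(* cut function: Psi(e) = all input-tree edges g (as edges of the display
   graph) such that e is the agreement edge corresponding to g *)
Definition psi (J : finType) (P : 'I_k -> ptree X I) (S : ptree X J)
    (e : {set X + J}) : {set {set X + ('I_k * I)}} :=
  [set f | [exists i : 'I_k, [exists g in pE (P i),
     [exists u : X + J, [exists v : X + J, [exists a : X + I, [exists b : X + I,
       [&& e == [set u; v], g == [set a; b], f == emb i @: g,
           labels (P i) :&: sideL S e u != set0,
           labels (P i) :&: sideL S e v != set0,
           sideL (P i) g a == labels (P i) :&: sideL S e u &
           sideL (P i) g b == labels (P i) :&: sideL S e v]]]]]]]].

End Phylo.

(* Main.v *)
Require Import Defs.
From mathcomp Require Import all_boot.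
From mathcomp Require Import boolp.

Set Implicit Arguments.
Unset Strict Implicit.
Unset Printing Implicit Defensive.



Section Gen.
Variable V : finType.
Implicit Types (E F : {set {set V}}) (x y z : V) (Vs : {set V}).

Lemma adj_sym E : symmetric (adj E).
Proof. by move=> x y; rewrite /adj setUC. Qed.

Lemma connect_symE E x y : connect (adj E) x y = connect (adj E) y x.
Proof. exact: (sym_connect_sym (adj_sym E)). Qed.

Lemma closedP (e : rel V) (Q : V -> Prop) x y :
  (forall a b, Q a -> e a b -> Q b) -> Q x -> connect e x y -> Q y.
Proof.
move=> cl Qx /connectP [p pp ->]; elim: p x Qx pp => //= a p IH x Qx /andP[exa pa].
exact: IH (cl _ _ Qx exa) pa.
Qed.

Lemma connect_mono E E' x y : E \subset E' -> connect (adj E) x y -> connect (adj E') x y.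
Proof.
move=> sub; apply: connect_sub => a b h; apply: connect1; exact: (subsetP sub).
Qed.

Lemma set2_eq (a b c d : V) : [set a; b] = [set c; d] -> (a = c /\ b = d) \/ (a = d /\ b = c).
Proof.
move=> H.
have /set2P ha : a \in [set c; d] by rewrite -H set21.
have /set2P hb : b \in [set c; d] by rewrite -H set22.
have /set2P hc : c \in [set a; b] by rewrite H set21.
have /set2P hd : d \in [set a; b] by rewrite H set22.
case: ha hb hc hd => -> [] -> [] ? [] ?; subst; tauto.
Qed.

Lemma ucycle_of_path E w q : uniq (w :: q) -> path (adj E) w q ->
  adj E (last w q) w -> ucycle (adj E) (w :: q).
Proof. by move=> /= /andP[u1 u2] p l; rewrite /ucycle /= rcons_path p l u1 u2. Qed.

Lemma tree_nocycle Vs E w q : is_tree Vs E -> uniq (w :: q) -> path (adj E) w q ->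
  adj E (last w q) w -> size q <= 1.
Proof.
case=> _ _ H u p l; have := H _ (ucycle_of_path u p l); by [].
Qed.

Lemma graph_adj Vs E x y : is_graph Vs E -> adj E x y -> [/\ x \in Vs, y \in Vs & x != y].
Proof.
move=> G /G [a [b [aV bV ab /set2_eq [[-> ->]|[-> ->]]]]]; split => //.
by rewrite eq_sym.
Qed.

Lemma split_edge E p q z : connect (adj E) p z ->
  connect (adj (E :\ [set p; q])) p z \/ connect (adj (E :\ [set p; q])) q z.
Proof.
apply: (closedP (Q := fun w => connect (adj (E :\ [set p; q])) p w \/ connect (adj (E :\ [set p; q])) q w)); last by left.
move=> a b Qa ab; case: (eqVneq [set a; b] [set p; q]) => [/set2_eq|ne].
  by case=> [[_ ->]|[_ ->]]; [right|left].
have ab' : adj (E :\ [set p; q]) a b by rewrite /adj in_setD1 ne.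
case: Qa => h; [left|right]; apply: connect_trans h _; exact: connect1.
Qed.


Definition compS (Vs : {set V}) E x := [set y in Vs | connect (adj E) x y].

Lemma ncompE (Vs : {set V}) E : ncomp Vs E = #|[set compS Vs E x | x in Vs]|.
Proof. by []. Qed.

Lemma comp_eq Vs E x y : connect (adj E) x y -> compS Vs E x = compS Vs E y.
Proof.
move=> h; apply/setP => z; rewrite !inE; congr (_ && _).
exact: (same_connect (sym_connect_sym (adj_sym E)) h z).
Qed.

Lemma comp_neq Vs E x y : y \in Vs -> ~~ connect (adj E) x y -> compS Vs E x != compS Vs E y.
Proof.
move=> yV nc; apply/eqP => h.
have : y \in compS Vs E y by rewrite inE yV connect0.
by rewrite -h inE (negbTE nc) andbF.
Qed.

Lemma ncomp_ge2 Vs E x y : x \in Vs -> y \in Vs -> ~~ connect (adj E) x y -> 1 < ncomp Vs E.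
Proof.
move=> xV yV nc; rewrite ncompE; apply/card_gt1P; exists (compS Vs E x), (compS Vs E y).
by split; [apply: imset_f|apply: imset_f|apply: comp_neq].
Qed.

Lemma ncomp2_cover Vs E x y z : ncomp Vs E = 2 -> x \in Vs -> y \in Vs ->
  ~~ connect (adj E) x y -> z \in Vs -> connect (adj E) x z \/ connect (adj E) y z.
Proof.
move=> n2 xV yV nc zV.
set A := [set compS Vs E w | w in Vs].
have sub : [set compS Vs E x; compS Vs E y] \subset A.
  by apply/subsetP => c /set2P [] ->; apply: imset_f.
have eqA : [set compS Vs E x; compS Vs E y] = A.
  apply/eqP; rewrite eqEcard sub /= cards2 comp_neq //.
  by rewrite -ncompE n2.
have : compS Vs E z \in [set compS Vs E x; compS Vs E y] by rewrite eqA imset_f.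
have zz : z \in compS Vs E z by rewrite inE zV connect0.
case/set2P => h; move: zz; rewrite h inE => /andP[_ c]; by [left|right].
Qed.

Lemma mincut_ncomp Vs E F x y : connected_graph Vs E -> is_min_cut Vs E F ->
  x \in Vs -> y \in Vs -> ~~ connect (adj (E :\: F)) x y -> ncomp Vs (E :\: F) = 2.
Proof.
move=> [_ conn] [[FE _] minF] xV yV nc.
have ge2 := ncomp_ge2 xV yV nc.
apply/eqP; rewrite eqn_leq ge2 andbT leqNgt; apply/negP.
rewrite ncompE => /card_gt2P [c1 [c2 [c3 [[h1 h2 h3] [n12 n23 n31]]]]].
move: h1 h2 h3 n12 n23 n31 => /imsetP [z1 z1V ->] /imsetP [z2 z2V ->] /imsetP [z3 z3V ->] n12 n23 n31.
set E' := E :\: F.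
have nc' : forall a b, compS Vs E' a != compS Vs E' b -> ~ connect (adj E') a b.
  by move=> a b /eqP ne h; apply: ne; apply: comp_eq.
have c12 := nc' _ _ n12. have c23 := nc' _ _ n23. have c31 := nc' _ _ n31.
pose Q w := connect (adj E') z1 w.
have [a [b [ab Qa nQb]]] : exists a b, [/\ adj E a b, Q a & ~ Q b].
  apply: contrapT => H; apply: c12.
  apply: (closedP (Q := Q)) (connect0 _ _) (conn _ _ z1V z2V).
  move=> a b Qa ab; apply: contrapT => nQb; apply: H; by exists a, b.
have abF : [set a; b] \in F.
  apply: contrapT => /negP nF; apply: nQb; apply: connect_trans Qa (connect1 _).
  by rewrite /adj in_setD nF.
set f := [set a; b].
pose w := if connect (adj E') b z2 then z3 else z2.
have nw1 : ~ connect (adj E') z1 w.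
  rewrite /w; case: ifP => _ //; by rewrite connect_symE.
have nw2 : ~ connect (adj E') b w.
  rewrite /w; case: ifP => h //.
  - move=> h'; apply: c23; apply: connect_trans h'; by rewrite connect_symE.
  - by move/negbT: h => /negP.
apply: (minF (F :\ f)); first exact: properD1.
split; first by apply: subset_trans FE; apply: subsetDl.
case=> _ /(_ z1 w z1V) cw.
have wV : w \in Vs by rewrite /w; case: ifP.
suff : connect (adj E') z1 w \/ connect (adj E') b w by case.
apply: (closedP (Q := fun t => connect (adj E') z1 t \/ connect (adj E') b t) _ _ (cw wV)); last by left.
  move=> s t Qs st.
  case: (eqVneq [set s; t] f) => [/set2_eq [[_ ->]|[_ ->]]|ne].
  - by right.
  - by left.
  have st' : adj E' s t.
    by move: st; rewrite /adj /E' in_setD in_setD1 ne /= in_setD.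
  case: Qs => h; [left|right]; apply: connect_trans h (connect1 st').
Qed.


Lemma mem_split (s : seq V) n : n \in s -> exists s1 q, s = s1 ++ n :: q.
Proof.
move=> ns; exists (take (index n s) s), (drop (index n s).+1 s).
have h := drop_nth n (etrans (index_mem n s) ns); rewrite nth_index // in h.
by rewrite -h cat_take_drop.
Qed.

Lemma uniq_connect (e : rel V) x y : connect e x y ->
  exists p, [/\ path e x p, uniq (x :: p) & last x p = y].
Proof. by move/connectP => [p pp ->]; case: (shortenP pp) => p' pp' up' _; exists p'. Qed.

Lemma path_in Vs E x p : is_graph Vs E -> x \in Vs -> path (adj E) x p -> last x p \in Vs.
Proof.
move=> G; elim: p x => //= a p IH x xV /andP[xa pa]; apply: IH pa.
by case: (graph_adj G xa).
Qed.

Lemma penult Vs E x p n : is_tree Vs E -> uniq (x :: p) -> path (adj E) x p ->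
  n \in x :: p -> n != last x p -> adj E (last x p) n ->
  exists s1, x :: p = s1 ++ [:: n; last x p].
Proof.
move=> T u pp /mem_split [s1 [q eq]] nz zn.
have [u' pp' lq] : [/\ uniq (n :: q), path (adj E) n q & last x p = last n q].
  case: s1 eq => [|y s1] /= [ex ep]; subst; first by split.
  move: u pp; rewrite -cat_cons cat_uniq cat_path last_cat /= => /and3P[_ _ ->] /andP[_ /andP[_ ->]].
  by [].
rewrite lq in nz zn.
have := tree_nocycle T u' pp' zn.
case: q {u' pp'} eq lq nz zn => [|z' [|? ?]] eq lq nz zn //=; first by rewrite eqxx in nz.
by exists s1; rewrite eq lq.
Qed.


Lemma path_split (e e' : rel V) x p : path e x p -> ~~ path e' x p ->
  exists p1 z p2, [/\ p = p1 ++ z :: p2, e (last x p1) z & ~~ e' (last x p1) z].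
Proof.
elim: p x => //= a p IH x /andP[xa pa]; case: (boolP (e' x a)) => /= h.
  case/(IH _ pa) => p1 [z [p2 [-> h1 h2]]]; by exists (a :: p1), z, p2.
by move=> _; exists [::], a, p.
Qed.

Lemma belast_cons_cat (a : V) s z p2 : belast a (s ++ z :: p2) = a :: s ++ belast z p2.
Proof. by elim: s a => //= b s IH a; rewrite IH. Qed.

Lemma behead_belast_cat (x : V) p1 z p2 :
  behead (belast x (p1 ++ z :: p2)) = p1 ++ belast z p2.
Proof. by case: p1 => //= a p1; rewrite belast_cons_cat. Qed.

Lemma last_rev_belast (x : V) p : last (last x p) (rev (belast x p)) = x.
Proof.
have : last x p :: rev (belast x p) = rcons (rev p) x.
  by rewrite -rev_rcons -lastI rev_cons.
move: (last x p) (rev (belast x p)) => a s h.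
by rewrite -[RHS](last_rcons a (rev p) x) -h.
Qed.

Lemma cons_rev_belast (x : V) p : last x p :: rev (belast x p) = rev (x :: p).
Proof. by rewrite -rev_rcons -lastI. Qed.


Lemma card3 (T : finType) (a b c : T) : a != b -> a != c -> b != c -> #|a |: [set b; c]| = 3.
Proof. by move=> ab ac bc; rewrite cardsU1 cards2 !inE negb_or ab ac bc. Qed.

End Gen.



Section STree.
Variables (X J : finType) (S : ptree X J).
Hypothesis phS : is_phylo S.
Variables (e : {set X + J}) (u v : X + J).
Hypothesis eS : e \in pE S.
Hypothesis he : e = [set u; v].

Lemma treeS : is_tree (pV S) (pE S).
Proof. by case: phS. Qed.
Lemma graphS : is_graph (pV S) (pE S).
Proof. by case: treeS. Qed.
Lemma connS : connected_graph (pV S) (pE S).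
Proof. by case: treeS. Qed.

Lemma subE' : pE S :\ e \subset pE S.
Proof. exact: subD1set. Qed.

Lemma adjE' a b : adj (pE S :\ e) a b -> adj (pE S) a b.
Proof. by rewrite /adj in_setD1 => /andP[]. Qed.

Lemma uv_adj : adj (pE S) u v.
Proof. by rewrite /adj -he. Qed.

Lemma uV : u \in pV S.
Proof. by case: (graph_adj graphS uv_adj). Qed.
Lemma vV : v \in pV S.
Proof. by case: (graph_adj graphS uv_adj). Qed.

Lemma uv_neq : u != v.
Proof. by case: (graph_adj graphS uv_adj). Qed.

Lemma uv_nconn : ~ connect (adj (pE S :\ e)) u v.
Proof.
case/uniq_connect => p [pp up lp].
have pp' : path (adj (pE S)) u p := sub_path adjE' pp.
have := tree_nocycle treeS up pp'.
rewrite lp adj_sym uv_adj => /(_ isT).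
case: p pp up lp {pp'} => [|a [|? ?]] //= pp up lp _.
  by move: uv_neq; rewrite lp eqxx.
by move: pp; rewrite lp andbT /adj in_setD1 -he eqxx.
Qed.

Lemma side_cover z : z \in pV S ->
  connect (adj (pE S :\ e)) u z \/ connect (adj (pE S :\ e)) v z.
Proof.
move=> zV; rewrite he; apply: split_edge.
by case: connS => _ /(_ u z uV zV).
Qed.

Lemma sides_disj x : x \in sideL S e u -> x \in sideL S e v -> False.
Proof.
rewrite !inE => /andP[_ h1] /andP[_ h2]; apply: uv_nconn.
by apply: connect_trans h1 _; rewrite connect_symE.
Qed.

Lemma label_side x : x \in labels S -> x \in sideL S e u \/ x \in sideL S e v.
Proof.
rewrite inE => xV; case: (side_cover xV) => h; [left|right]; by rewrite inE xV h.
Qed.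

Lemma nb_of Vs (E : {set {set X + J}}) g z : is_graph Vs E -> g \in E -> z \in g ->
  exists n, g = [set z; n].
Proof.
move=> G /G [a [b [_ _ _ ->]]] /set2P [] ->; first by exists b.
by exists a; rewrite setUC.
Qed.

Lemma side_nonempty : exists x, x \in sideL S e u.
Proof.
apply: contrapT => H.
have noLab : forall x, inl x \in pV S -> ~ connect (adj (pE S :\ e)) u (inl x).
  by move=> x xV c; apply: H; exists x; rewrite inE xV c.
pose Pn n := `[< exists p, [/\ path (adj (pE S :\ e)) u p, uniq (u :: p) & size p = n] >].
have exP : exists n, Pn n by exists 0; apply/asboolP; exists [::].
have ub : forall n, Pn n -> n <= #|[set: X + J]|.
  move=> n /asboolP [p [_ up <-]]; move/card_uniqP: up => /= h.
  by apply: leq_trans (leqnSn _) _; rewrite -h cardsT max_card.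
case: (ex_maxnP exP ub) => m /asboolP [p [pp up sp]] maxm.
set z := last u p.
have pp' : path (adj (pE S)) u p := sub_path adjE' pp.
have zV : z \in pV S := path_in graphS uV pp'.
have zc : connect (adj (pE S :\ e)) u z by apply/connectP; exists p.
have ext : forall w, adj (pE S :\ e) z w -> w \in u :: p.
  move=> w zw; apply: contrapT => /negP wn.
  have : Pn (size p).+1.
    apply/asboolP; exists (rcons p w); split.
    - by rewrite rcons_path pp zw.
    - by rewrite -rcons_cons rcons_uniq wn up.
    - by rewrite size_rcons.
  by move/maxm; rewrite sp ltnn.
case zE : z => [x|j].
  by apply: (noLab x); rewrite -zE.
have dz : 3 <= deg (pE S) z by case: phS => _ _ /(_ j); rewrite -zE => /(_ zV).
set D := [set g in pE S | z \in g].
have : 1 < #|D :\ e|.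
  move: dz; rewrite /deg -/D (cardsD1 e D).
  by case: (e \in D) => //= h; apply: ltnW.
case/card_gt1P => g1 [g2 [g1D g2D g12]].
have getn : forall g, g \in D :\ e -> exists2 n, g = [set z; n] & 
    [/\ n \in u :: p, n != z & adj (pE S) z n].
  move=> g; rewrite in_setD1 inE => /and3P [ge gE zg].
  case: (nb_of graphS gE zg) => n gn; exists n => //.
  have zn : adj (pE S :\ e) z n by rewrite /adj in_setD1 -gn ge.
  split; first exact: ext.
    by case: (graph_adj graphS (adjE' zn)); rewrite eq_sym.
  exact: adjE'.
case: (getn _ g1D) => n1 g1n [n1p n1z zn1].
case: (getn _ g2D) => n2 g2n [n2p n2z zn2].
case: (penult treeS up pp' n1p n1z zn1) => s1 e1.
case: (penult treeS up pp' n2p n2z zn2) => s2 e2.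
have : rev (s1 ++ [:: n1; z]) = rev (s2 ++ [:: n2; z]) by rewrite -e1 -e2.
rewrite !rev_cat /= => [[n12]] _.
by move: g12; rewrite g1n g2n n12 eqxx.
Qed.

End STree.



Section Agree.
Variables (X I J : finType) (S : ptree X J) (T : ptree X I).
Hypothesis phS : is_phylo S.
Hypothesis phT : is_phylo T.
Hypothesis labTS : labels T \subset labels S.
Variables (e : {set X + J}) (u v : X + J).
Hypothesis eS : e \in pE S.
Hypothesis he : e = [set u; v].

Let Y : {set X + J} := [set (inl x : X + J) | x in labels T].
Let M := spanV (pV S) (pE S) Y.
Let ES := spanE (pE S) M.
Let W := suppV (pV S) (pE S) Y.
Let E' := pE S :\ e.

Lemma W_M w : w \in W -> w \in M.
Proof. by rewrite /W /suppV inE => /andP[]. Qed.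

Lemma W_V w : w \in W -> w \in pV S.
Proof. by move/W_M; rewrite /M /spanV inE => /andP[]. Qed.

Lemma adjES a b : adj ES a b -> [/\ adj (pE S) a b, a \in M & b \in M].
Proof.
rewrite /adj /ES /spanE inE => /andP[h sub].
by split => //; apply: (subsetP sub); rewrite !inE eqxx ?orbT.
Qed.

Lemma lab_W x : x \in labels T -> inl x \in W.
Proof.
move=> xT; have xS : inl x \in pV S by move: (subsetP labTS x xT); rewrite inE.
rewrite /W /suppV inE; apply/andP; split.
  rewrite /spanV inE xS /=; apply/asboolP; exists (inl x), (inl x); split.
  - by apply: imset_f.
  - by apply: imset_f.
  - by exists [::]; rewrite /= ?inE ?eqxx.
have : deg (spanE (pE S) (spanV (pV S) (pE S) Y)) (inl x) <= 1.
  apply: leq_trans (_ : deg (pE S) (inl x) <= 1).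
    apply: subset_leq_card; apply/subsetP => g; rewrite !inE => /andP[/andP[-> _] ->].
    by [].
  by case: phS => _ /(_ x xS).
by case: (deg _ _) => [|[|]].
Qed.

Lemma deg2 z : z \in M -> z \notin W -> deg ES z = 2.
Proof. by move=> zM; rewrite /W /suppV inE zM /= negbK => /eqP. Qed.

Lemma three_nb z a b c : deg ES z = 2 -> adj ES z a -> adj ES z b -> adj ES z c ->
  a != b -> a != c -> b = c.
Proof.
move=> d2 za zb zc ab ac; apply/eqP; apply: contraT => bc.
have nz : forall n, adj ES z n -> n != z.
  move=> n /adjES [h _ _]; case: (graph_adj (graphS phS) h) => _ _.
  by rewrite eq_sym.
have dist : forall n1 n2, n1 != n2 -> n1 != z -> n2 != z -> [set z; n1] != [set z; n2].
  move=> n1 n2 n12 n1z n2z; apply/eqP => h.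
  have : n2 \in [set z; n1] by rewrite h set22.
  by case/set2P => h'; [move: n2z|move: n12]; rewrite h' eqxx.
have : #|[set z; a] |: [set [set z; b]; [set z; c]]| <= deg ES z.
  apply: subset_leq_card; apply/subsetP => g; rewrite !inE.
  by case/or3P => /eqP ->; rewrite set21 andbT; [move: za|move: zb|move: zc]; rewrite /adj inE.
rewrite card3 ?d2 //; apply: dist => //; exact: nz.
Qed.

Definition Pend s t w := exists q, [/\ uniq (s :: t :: q), path (adj ES) s (t :: q),
  last t q = w, w \in W & forall z, z \in belast t q -> z \notin W].

Lemma chain q r s t : uniq (s :: t :: q) -> path (adj ES) s (t :: q) -> last t q \in W ->
  (forall z, z \in belast t q -> z \notin W) ->
  uniq (s :: t :: r) -> path (adj ES) s (t :: r) -> last t r \in W ->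
  (forall z, z \in belast t r -> z \notin W) -> q = r.
Proof.
elim: q s t r => [|q1 q IH] s t [|r1 r] //.
- move=> _ _ tW _ _ _ _ /(_ t); rewrite /= inE eqxx => /(_ isT); by rewrite tW.
- move=> _ _ _ /(_ t); rewrite /= inE eqxx => /(_ isT) ntW _ _ tW; by rewrite tW in ntW.
move=> uq /= /and3P[st tq1 pq] lq iq ur /= /and3P[_ tr1 pr] lr ir.
have tW : t \notin W by apply: iq; rewrite inE eqxx.
have [_ tM _] := adjES tq1.
have : q1 = r1.
  apply: (@three_nb t s q1 r1 (deg2 tM tW) _ tq1 tr1); first by rewrite adj_sym.
  - by apply/eqP => h; move: uq; rewrite h /= !inE eqxx ?orbT.
  - by apply/eqP => h; move: ur; rewrite h /= !inE eqxx ?orbT.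
move=> h; subst r1; congr (_ :: _).
apply: (IH t q1) => //.
- by case/andP: uq.
- by rewrite /= tq1.
- by move=> z zb; apply: iq; rewrite inE zb orbT.
- by case/andP: ur.
- by rewrite /= tq1.
- by move=> z zb; apply: ir; rewrite inE zb orbT.
Qed.

Lemma Pend_uniq s t w1 w2 : Pend s t w1 -> Pend s t w2 -> w1 = w2.
Proof.
case=> q [uq pq lq wq iq] [r [ur pr lr wr ir]].
rewrite -lq -lr in wq wr *.
by rewrite (chain uq pq wq iq ur pr wr ir).
Qed.


Lemma cross_e w1 w2 : w1 \in W -> w2 \in W -> suppAdj (pV S) (pE S) Y w1 w2 ->
  connect (adj E') u w1 -> ~ connect (adj E') u w2 ->
  exists s t, [/\ [set s; t] = e, Pend s t w2 & Pend t s w1].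
Proof.
move=> w1W w2W [_ [p [up pp lp inner]]] c1 nc2.
have npp : ~~ path (adj E') w1 p.
  apply/negP => h; apply: nc2; apply: connect_trans c1 _; apply/connectP.
  by exists p; rewrite ?lp.
case: (path_split pp npp) => p1 [z [p2 [pE h1 h2]]].
set y := last w1 p1 in h1 h2.
have yz : [set y; z] = e.
  case: (adjES h1) => h _ _; move: h2 h; rewrite /adj /E' in_setD1 => h2 h; rewrite h andbT negbK in h2.
  exact/eqP.
have inner' : forall z', z' \in p1 ++ belast z p2 -> z' \notin W.
  by move=> z' h; apply: inner; rewrite pE behead_belast_cat.
move: up; rewrite pE -cat_cons cat_uniq => /and3P [u1 hs u2].
move: pp; rewrite pE cat_path => /andP [pp1 pp2].
have yin : y \in w1 :: p1 by apply: mem_last.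
have zn : z \notin w1 :: p1 by apply: (hasPn hs); rewrite inE eqxx.
have yn : y \notin z :: p2.
  apply/negP => h; move/hasPn: hs => /(_ y h); by rewrite yin.
exists y, z; split => //.
- exists p2; split => //.
  + by rewrite cons_uniq yn u2.
  + by rewrite -lp pE last_cat.
  + by move=> z' h; apply: inner'; rewrite mem_cat h orbT.
- exists (rev (belast w1 p1)); split => //.
  + by rewrite /y cons_rev_belast /= mem_rev zn rev_uniq.
  + rewrite /= adj_sym h1 /= /y rev_path.
    have e2 : (fun a b => adj ES b a) =2 adj ES by move=> a b; rewrite adj_sym.
    by rewrite (eq_path e2).
  + by rewrite /y last_rev_belast.
  + move=> z' zb.
    have zm := mem_belast zb.
    have ul : uniq (y :: rev (belast w1 p1)) by rewrite /y cons_rev_belast rev_uniq.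
    have zw : z' != w1.
      apply/eqP => zw.
      have hw : w1 \in belast y (rev (belast w1 p1)) by rewrite -{1}zw.
      move: ul; rewrite lastI rcons_uniq => /andP[h _]; move: h.
      by rewrite {1}/y last_rev_belast hw.
    move: zm; rewrite /y cons_rev_belast mem_rev in_cons (negbTE zw) /= => zp.
    by apply: inner'; rewrite mem_cat zp.
Qed.


Lemma bichrom_uniq w1 w2 w3 w4 : w1 \in W -> w2 \in W -> w3 \in W -> w4 \in W ->
  suppAdj (pV S) (pE S) Y w1 w2 -> suppAdj (pV S) (pE S) Y w3 w4 ->
  connect (adj E') u w1 -> ~ connect (adj E') u w2 ->
  connect (adj E') u w3 -> ~ connect (adj E') u w4 -> w1 = w3 /\ w2 = w4.
Proof.
move=> W1 W2 W3 W4 a12 a34 c1 n2 c3 n4.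
case: (cross_e W1 W2 a12 c1 n2) => s [t [st P2 P1]].
case: (cross_e W3 W4 a34 c3 n4) => s' [t' [st' P4 P3]].
rewrite -st' in st; case: (set2_eq st) => [[es et]|[es et]]; subst s' t'.
  by split; [apply: Pend_uniq P1 P3|apply: Pend_uniq P2 P4].
by have := Pend_uniq P2 P3 => h; subst w3.
Qed.

Lemma sep_edge : agrees S T ->
  (exists x, x \in labels T :&: sideL S e u) ->
  (exists y, y \in labels T :&: sideL S e v) ->
  exists a b, [/\ [set a; b] \in pE T,
    sideL T [set a; b] a = labels T :&: sideL S e u &
    sideL T [set a; b] b = labels T :&: sideL S e v].
Proof.
case=> f [finj fim flab fadj] [x /setIP[xT xu]] [y /setIP[yT yv]].
have graphT : is_graph (pV T) (pE T) by case: phT => [[]].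
have connT : connected_graph (pV T) (pE T) by case: phT => [[]].
pose Uc t := exists w, [/\ w \in W, f w = t & connect (adj E') u w].
have fW : forall t, t \in pV T -> exists2 w, w \in W & f w = t.
  by move=> t; rewrite -fim => /imsetP [w wW ->]; exists w.
have UcE : forall w, w \in W -> Uc (f w) <-> connect (adj E') u w.
  move=> w wW; split; last by exists w.
  by case=> w' [w'W fw c]; rewrite -(finj _ _ w'W wW fw).
have labU : forall z, z \in labels T -> Uc (inl z) <-> z \in sideL S e u.
  move=> z zT; have zW := lab_W zT; rewrite -(flab _ zW) UcE //.
  rewrite inE (W_V zW) /=; by split => // /idP.
have xT' : inl x \in pV T by move: xT; rewrite inE.
have yT' : inl y \in pV T by move: yT; rewrite inE.
have Ux : Uc (inl x) by apply/labU.
have nUy : ~ Uc (inl y).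
  by move/labU => /(_ yT) yu; apply: (sides_disj phS eS he yu yv).
have [t1 [t2 [t12 U1 nU2]]] : exists t1 t2, [/\ adj (pE T) t1 t2, Uc t1 & ~ Uc t2].
  apply: contrapT => H; apply: nUy.
  apply: (closedP (Q := Uc)) Ux (connT.2 _ _ xT' yT').
  move=> a b Ua ab; apply: contrapT => nUb; apply: H; by exists a, b.
case: (graph_adj graphT t12) => t1V t2V _.
case: (fW _ t1V) => w1 W1 ft1; case: (fW _ t2V) => w2 W2 ft2; subst t1 t2.
have c1 : connect (adj E') u w1 by apply/UcE.
have nc2 : ~ connect (adj E') u w2 by move/(UcE _ W2).
have sa12 := (fadj _ _ W1 W2).2 t12.
set g := [set f w1; f w2].
have uniqE : forall s s', adj (pE T :\ g) s s' -> Uc s -> Uc s'.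
  move=> s s' ss' Us; apply: contrapT => nUs'.
  move: ss'; rewrite /adj in_setD1 => /andP [ng ss'].
  case: (graph_adj graphT ss') => sV s'V _.
  case: (fW _ sV) => w3 W3 fs; case: (fW _ s'V) => w4 W4 fs'; subst s s'.
  have c3 : connect (adj E') u w3 by apply/UcE.
  have nc4 : ~ connect (adj E') u w4 by move/(UcE _ W4).
  have sa34 := (fadj _ _ W3 W4).2 ss'.
  case: (bichrom_uniq W1 W2 W3 W4 sa12 sa34 c1 nc2 c3 nc4) => e1 e2; subst w3 w4.
  by rewrite eqxx in ng.
have uniqE' : forall s s', adj (pE T :\ g) s s' -> ~ Uc s -> ~ Uc s'.
  by move=> s s' ss' nUs Us'; apply: nUs; apply: uniqE Us'; rewrite adj_sym.
have side1 : forall z, connect (adj (pE T :\ g)) (f w1) (inl z) -> z \in sideL S e u.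
  move=> z c; have zT : z \in labels T.
    rewrite inE; move/connectP: (c) => [p pp ->]; apply: (path_in graphT t1V).
    by apply: sub_path pp => a b; rewrite /adj in_setD1 => /andP[].
  by apply/(labU z zT); apply: (closedP (Q := Uc) (fun a b Ua ab => uniqE a b ab Ua) U1 c).
have side2 : forall z, connect (adj (pE T :\ g)) (f w2) (inl z) -> ~ (z \in sideL S e u).
  move=> z c; have zT : z \in labels T.
    rewrite inE; move/connectP: (c) => [p pp ->]; apply: (path_in graphT t2V).
    by apply: sub_path pp => a b; rewrite /adj in_setD1 => /andP[].
  by move/(labU z zT); apply: (closedP (Q := fun t => ~ Uc t) (fun a b Ua ab => uniqE' a b ab Ua) nU2 c).
exists (f w1), (f w2); split => //.
- apply/eqP; rewrite eqEsubset; apply/andP; split; apply/subsetP => z.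
    rewrite inE => /andP [zT c]; rewrite inE; apply/andP; split.
      by rewrite inE.
    exact: side1.
  case/setIP => zT zu; have zT' : inl z \in pV T by move: zT; rewrite inE.
  case: (@split_edge _ (pE T) (f w1) (f w2) (inl z) (connT.2 _ _ t1V zT')) => c.
    by rewrite inE zT' c.
  by case: (side2 _ c).
- apply/eqP; rewrite eqEsubset; apply/andP; split; apply/subsetP => z.
    rewrite inE => /andP [zT c]; rewrite inE; apply/andP; split.
      by rewrite inE.
    have zS : z \in labels S by apply: (subsetP labTS); rewrite inE.
    case: (label_side phS eS he zS) => // zu.
    by case: (side2 _ c).
  case/setIP => zT zv; have zT' : inl z \in pV T by move: zT; rewrite inE.
  case: (@split_edge _ (pE T) (f w1) (f w2) (inl z) (connT.2 _ _ t1V zT')) => c.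
    by case: (sides_disj phS eS he (side1 _ c) zv).
  by rewrite inE zT' c.
Qed.

End Agree.



Section Main.
Variables (X I J : finType) (k : nat) (P : 'I_k -> ptree X I) (S : ptree X J).
Hypothesis phP : forall i, is_phylo (P i).
Hypothesis agS : agreement_supertree P S.
Variable e : {set X + J}.
Hypothesis eS : e \in pE S.

Let Psi := psi P S e.

Lemma phS : is_phylo S. Proof. by case: agS. Qed.
Lemma labS : labels S = \bigcup_(i < k) labels (P i). Proof. by case: agS. Qed.
Lemma agr i : agrees S (P i). Proof. by case: agS => _ _ /(_ i). Qed.
Lemma labTS i : labels (P i) \subset labels S.
Proof. by rewrite labS; apply: (bigcup_sup i). Qed.
Lemma graphP i : is_graph (pV (P i)) (pE (P i)). Proof. by case: (phP i) => [[]]. Qed.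

Lemma imset_set2 (A B : finType) (h : A -> B) a b : h @: [set a; b] = [set h a; h b].
Proof. by rewrite imsetU1 imset_set1. Qed.

Definition Ri (i : 'I_k) := [set g in pE (P i) | emb i @: g \notin Psi].

Definition goodA (vv : X + J) (i : 'I_k) w := forall y, y \in sideL S e vv -> inl y \in pV (P i) ->
  ~ connect (adj (Ri i)) w (inl y).

Definition Gd vv z := forall i w, w \in pV (P i) -> emb i w = z -> goodA vv i w.

Lemma emb_inl (i : 'I_k) (w : X + I) x : emb i w = inl x -> w = inl x.
Proof. by case: w => //= ? [->]. Qed.

Lemma Ri_sub (i : 'I_k) g : g \in pE (P i) -> emb i @: g \in Psi -> Ri i \subset pE (P i) :\ g.
Proof.
move=> gE gP; apply/subsetP => g'; rewrite /Ri inE => /andP[g'E ng'].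
rewrite in_setD1 g'E andbT; apply/eqP => h; by rewrite h gP in ng'.
Qed.

Lemma psi_in (i : 'I_k) g uu vv a b : e = [set uu; vv] -> g = [set a; b] -> g \in pE (P i) ->
  labels (P i) :&: sideL S e uu != set0 -> labels (P i) :&: sideL S e vv != set0 ->
  sideL (P i) g a = labels (P i) :&: sideL S e uu ->
  sideL (P i) g b = labels (P i) :&: sideL S e vv -> emb i @: g \in Psi.
Proof.
move=> he hg gE n1 n2 s1 s2; rewrite /Psi /psi inE.
apply/existsP; exists i; apply/existsP; exists g; rewrite gE /=.
apply/existsP; exists uu; apply/existsP; exists vv; apply/existsP; exists a; apply/existsP; exists b.
by rewrite n1 n2 s1 s2 !eqxx /= he hg !eqxx.
Qed.

Section Orient.
Variables (u v : X + J).
Hypothesis he : e = [set u; v].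

Lemma K1 x j : x \in sideL S e u -> inl x \in pV (P j) -> goodA v j (inl x).
Proof.
move=> xu xj y yv yj c.
have xT : x \in labels (P j) by rewrite inE.
have yT : y \in labels (P j) by rewrite inE.
have hx : x \in labels (P j) :&: sideL S e u by rewrite inE xT xu.
have hy : y \in labels (P j) :&: sideL S e v by rewrite inE yT yv.
have [a [b [gE sa sb]]] := sep_edge phS (phP j) (labTS j) eS he (agr j)
  (ex_intro _ x hx) (ex_intro _ y hy).
have gP : emb j @: [set a; b] \in Psi.
  apply: (psi_in he erefl gE) => //; apply/set0Pn.
  - by exists x; rewrite inE xT xu.
  - by exists y; rewrite inE yT yv.
have c' := connect_mono (Ri_sub gE gP) c.
have : x \in sideL (P j) [set a; b] a by rewrite sa inE xT xu.
rewrite inE => /andP [_ ca].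
have : y \in sideL (P j) [set a; b] a by rewrite inE yj (connect_trans ca c').
rewrite sa => /setIP [_ yu].
exact: (sides_disj phS eS he yu yv).
Qed.

Lemma K2 i w : w \in pV (P i) -> goodA v i w -> Gd v (emb i w).
Proof.
move=> wV gw j w' w'V; case: w wV gw => [x|c] wV gw /=.
  move/emb_inl => ew'; subst w'.
  have xS : x \in labels S by apply: (subsetP (labTS i)); rewrite inE.
  case: (label_side phS eS he xS) => [xu|xv]; first exact: K1.
  by case: (gw x xv wV (connect0 _ _)).
case: w' w'V => [x'|c'] //= w'V [ej ec]; subst j c'; exact: gw.
Qed.

Lemma K3 z1 z2 : Gd v z1 -> adj (dE P :\: Psi) z1 z2 -> Gd v z2.
Proof.
move=> G1; rewrite /adj in_setD => /andP [nP /bigcupP [i _ /imsetP [g gE eq]]].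
have step : forall wa wb, [set wa; wb] = g -> emb i wa = z1 -> emb i wb = z2 -> Gd v z2.
  move=> wa wb hg h1 h2.
  have wab : adj (pE (P i)) wa wb by rewrite /adj hg.
  case: (graph_adj (@graphP i) wab) => waV wbV _.
  have ga := G1 i wa waV h1.
  rewrite -h2; apply: K2 => // y yv yi c; apply: (ga y yv yi).
  apply: connect_trans c; apply: connect1.
  by rewrite /adj /Ri inE hg gE /= -eq.
case: (@graphP i _ gE) => w1 [w2 [_ _ _ hg]].
move: eq; rewrite hg imset_set2 => /set2_eq [[h1 h2]|[h1 h2]].
  exact: (step w1 w2).
by apply: (step w2 w1) => //; rewrite setUC.
Qed.

Lemma K4 z1 z2 : Gd v z1 -> connect (adj (dE P :\: Psi)) z1 z2 -> Gd v z2.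
Proof. by move=> G1; apply: (closedP (Q := Gd v)) G1 => a b Ga ab; apply: K3 Ga ab. Qed.

Lemma K5 y j : y \in sideL S e v -> inl y \in pV (P j) -> ~ Gd v (inl y).
Proof. by move=> yv yj G; apply: (G j (inl y) yj erefl y yv yj (connect0 _ _)). Qed.

Lemma K6 x : x \in sideL S e u -> Gd v (inl x).
Proof. by move=> xu j w wV /emb_inl ew; subst w; apply: K1. Qed.

End Orient.

Lemma side_in_tree uu x : x \in sideL S e uu -> exists j, inl x \in pV (P j).
Proof.
rewrite inE => /andP [xS _]; have : x \in labels S by rewrite inE.
by rewrite labS => /bigcupP [j _]; rewrite inE => h; exists j.
Qed.

Lemma tree_dV (j : 'I_k) w : w \in pV (P j) -> emb j w \in dV P.
Proof. by move=> h; apply/bigcupP; exists j => //; apply: imset_f. Qed.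

Lemma witness u v : e = [set u; v] -> exists x y,
  [/\ inl x \in dV P, inl y \in dV P, x \in sideL S e u, y \in sideL S e v &
      ~ connect (adj (dE P :\: Psi)) (inl x) (inl y)].
Proof.
move=> he.
have he' : e = [set v; u] by rewrite he setUC.
case: (side_nonempty phS eS he) => x xu.
case: (side_nonempty phS eS he') => y yv.
case: (side_in_tree xu) => jx xj; case: (side_in_tree yv) => jy yj.
exists x, y; split => //.
- exact: (tree_dV xj).
- exact: (tree_dV yj).
by move=> c; apply: (K5 yv yj); apply: (K4 he) c; apply: (K6 he) xu.
Qed.

Lemma Psi_sub : Psi \subset dE P.
Proof.
apply/subsetP => f; rewrite /Psi /psi inE => /existsP [i /existsP [g /andP [gE h]]].
move: h => /existsP [? /existsP [? /existsP [? /existsP [? /and5P [_ _ /eqP -> _ _]]]]].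
by apply/bigcupP; exists i => //; apply: imset_f.
Qed.

Lemma part1 : is_cut (dV P) (dE P) Psi.
Proof.
split; first exact: Psi_sub.
have [u [v [_ _ _ he]]] := graphS phS eS.
case: (witness he) => x [y [xV yV _ _ nc]].
by case=> _ /(_ _ _ xV yV).
Qed.


Lemma part2 : connected_graph (dV P) (dE P) ->
  is_min_cut (dV P) (dE P) Psi <-> ncomp (dV P) (dE P :\: Psi) = 2.
Proof.
move=> connG; split.
  move=> mc; have [u [v [_ _ _ he]]] := graphS phS eS.
  case: (witness he) => x [y [xV yV _ _ nc]].
  by apply: (mincut_ncomp connG mc xV yV); apply/negP.
move=> n2; split; first exact: part1.
move=> F' /properP [F'sub [f fP fF']].
move: (fP); rewrite /Psi /psi inE => /existsP [i /existsP [g /andP [gE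
  /existsP [u' /existsP [v' /existsP [a /existsP [b
  /and5P [/eqP he /eqP hg /eqP hf _ /andP [_ /andP [/eqP sa /eqP sb]]]]]]]]]].
have he' : e = [set v'; u'] by rewrite he setUC.
subst f.
have ab : adj (pE (P i)) a b by rewrite /adj -hg.
case: (graph_adj (@graphP i) ab) => aV bV _.
have Ga : Gd v' (emb i a).
  apply: (K2 he aV) => y yv yi c.
  have c' := connect_mono (Ri_sub gE fP) c.
  have : y \in sideL (P i) g a by rewrite inE yi c'.
  rewrite sa => /setIP [_ yu]; exact: (sides_disj phS eS he yu yv).
have Gb : Gd u' (emb i b).
  apply: (K2 he' bV) => y yu yi c.
  have c' := connect_mono (Ri_sub gE fP) c.
  have : y \in sideL (P i) g b by rewrite inE yi c'.
  rewrite sb => /setIP [_ yv]; exact: (sides_disj phS eS he yu yv).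
case: (witness he) => x [y [xV yV xu yv nc]].
case: (side_in_tree xu) => jx xj; case: (side_in_tree yv) => jy yj.
have nc' : ~~ connect (adj (dE P :\: Psi)) (inl x) (inl y) by apply/negP.
have cover := ncomp2_cover n2 xV yV nc'.
have ca : connect (adj (dE P :\: Psi)) (inl x) (emb i a).
  case: (cover _ (tree_dV aV)) => // c; exfalso.
  by apply: (K5 yv yj); apply: (K4 he) Ga _; rewrite connect_symE.
have cb : connect (adj (dE P :\: Psi)) (inl y) (emb i b).
  case: (cover _ (tree_dV bV)) => // c; exfalso.
  by apply: (K5 xu xj); apply: (K4 he') Gb _; rewrite connect_symE.
case => _; apply; split; first by exists (inl x).
have sub : dE P :\: Psi \subset dE P :\: F' by apply: setDS.
have fE : adj (dE P :\: F') (emb i a) (emb i b).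
  by rewrite /adj in_setD -imset_set2 -hg fF' (subsetP Psi_sub _ fP).
have all : forall z, z \in dV P -> connect (adj (dE P :\: F')) (inl x) z.
  move=> z zV; case: (cover _ zV) => c; first exact: connect_mono sub c.
  apply: connect_trans (connect_mono sub ca) _.
  apply: connect_trans (connect1 fE) _.
  apply: connect_trans (connect_mono sub c).
  by rewrite connect_symE; apply: connect_mono sub cb.
move=> z1 z2 z1V z2V; apply: connect_trans (all _ z2V).
by rewrite connect_symE; apply: all.
Qed.

End Main.

Theorem lemma13 (X I J : finType) (k : nat)
    (P : 'I_k -> ptree X I) (S : ptree X J) :
  (forall i, is_phylo (P i)) ->
  connected_graph (dV P) (dE P) ->
  agreement_supertree P S ->
  (forall e, e \in pE S -> is_cut (dV P) (dE P) (psi P S e)) /\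
  (forall e, e \in pE S ->
     (is_min_cut (dV P) (dE P) (psi P S e) <->
      ncomp (dV P) (dE P :\: psi P S e) = 2)).
Proof.
move=> phP connG agS; split => e eS; first exact: part1.
exact: part2.
Qed.
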